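(* Let $C_0[-1,1]$ be the Banach space (sup norm) of continuous complex functions on $[-1,1]$ vanishing at $\pm1$. Let $\theta_1\colon[0,1]\to[-1,0]$ be a decreasing bijection and $\theta_2\colon[0,1]\to[0,1]$ an increasing bijection. For $t\in[0,1]$ let $\mathscr{N}_t=\{f\in C_0[-1,1]:\mathrm{supp}(f)\subseteq[\theta_1(t),\theta_2(t)]\}$ and $\mathfrak{N}=\{\mathscr{N}_t:t\in[0,1]\}$ (a maximal nest). Let $\varGamma([-1,1])$ be the group (under composition) of increasing bijections of $[-1,1]$, and for $\varphi\in\varGamma([-1,1])$ let $V_\varphi f=f\circ\varphi$ ($f\in C_0[-1,1]$). Then: (i) $\varGamma_{\theta_1,\theta_2}([-1,1]):=\{\varphi\in\varGamma([-1,1]):\theta_1^{-1}\circ\varphi\circ\theta_1=\theta_2^{-1}\circ\varphi\circ\theta_2\}$ is a subgroup of $\varGamma([-1,1])$; (ii) for $\varphi\in\varGamma([-1,1])$, $V_\varphi$ is a collineation of $\mathfrak{N}$ if and only if $\varphi\in\varGamma_{\theta_1,\theta_2}([-1,1])$, and hence $\mathcal{O}(\mathfrak{N})=\{V_\varphi:\varphi\in\varGamma_{\theta_1,\theta_2}([-1,1])\}$ is a subgroup of $\mathrm{Col}(\mathfrak{N})$; (iii) $\mathrm{Col}(\mathfrak{N})=\mathrm{Grp}(\mathrm{Alg}(\mathfrak{N}))\rtimes\mathcal{O}(\mathfrak{N})$.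
   Context: $\mathrm{supp}(f)=\overline{\{x:f(x)\neq0\}}$. In (i), the condition $\theta_1^{-1}\circ\varphi\circ\theta_1=\theta_2^{-1}\circ\varphi\circ\theta_2$ is understood as an equality of maps on $[0,1]$ (in particular both sides must be defined). $\mathrm{Alg}(\mathfrak{F})$ is the set of bounded operators leaving every subspace of $\mathfrak{F}$ invariant; $\mathrm{Grp}(\mathcal{A})$ is the group of invertible $S\in\mathcal{A}$ with $S^{-1}\in\mathcal{A}$. $\mathrm{Col}(\mathfrak{F})$ is the group of invertible bounded $S$ such that for every closed subspace $\mathscr{M}$: $\mathscr{M}\in\mathfrak{F}$ iff $S\mathscr{M}\in\mathfrak{F}$. For a subgroup $\mathcal{O}\subseteq\mathrm{Col}(\mathfrak{F})$, $\mathrm{Col}(\mathfrak{F})=\mathrm{Grp}(\mathrm{Alg}(\mathfrak{F}))\rtimes\mathcal{O}$ means $\mathrm{Col}(\mathfrak{F})=\{AT:A\in\mathrm{Grp}(\mathrm{Alg}(\mathfrak{F})),T\in\mathcal{O}\}$ and $\mathrm{Grp}(\mathrm{Alg}(\mathfrak{F}))\cap\mathcal{O}=\{I\}$. *)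

(* Defs.v *)
From mathcomp Require Import all_boot all_order all_algebra.
From mathcomp Require Import all_classical all_reals all_analysis.
From mathcomp.real_closed Require Import complex.
Import Order.TTheory GRing.Theory Num.Theory numFieldNormedType.Exports.

Set Implicit Arguments.
Unset Strict Implicit.
Unset Printing Implicit Defensive.

Local Open Scope ring_scope.
Local Open Scope classical_set_scope.
Local Open Scope complex_scope.

Section Defs.
Variable R : realType.

(* An element of C_0[-1,1] is
   represented by its extension by 0 outside [-1,1] (this extension is
   unique, and the sup norm over [-1,1] equals the sup norm over R). *)
Definition cfun := R -> R[i].

Definition cont_on_I (f : cfun) : Prop :=
  forall x, x \in `[-1, 1] -> forall e : R, 0 < e ->
    exists2 d : R, 0 < d & forall y, y \in `[-1, 1] ->
      `|y - x| < d -> `|f y - f x| < e%:C.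

Definition C0 : set cfun :=
  [set f | cont_on_I f /\ f (-1) = 0 /\ f 1 = 0 /\
           (forall x, x \notin `[-1, 1] -> f x = 0)].

Definition supnorm_le (f : cfun) (c : R) : Prop := forall x, `|f x| <= c%:C.

Definition sup_cvg (u : nat -> cfun) (g : cfun) : Prop :=
  forall e : R, 0 < e -> exists N : nat, forall n, (N <= n)%N ->
    forall x, `|u n x - g x| < e%:C.

Definition closed_subspace (M : set cfun) : Prop :=
  [/\ M `<=` C0, M (fun=> 0),
      (forall (a : R[i]) f g, M f -> M g -> M (fun x => a * f x + g x)) &
      (forall (u : nat -> cfun) g, (forall n, M (u n)) -> C0 g ->
          sup_cvg u g -> M g)].

(* operators act on cfun; they are considered only on C0 *)
Definition op := cfun -> cfun.

Definition op_eq (S T : op) : Prop := forall f, C0 f -> S f = T f.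

Definition op_id : op := id.
Definition op_comp (S T : op) : op := fun f => S (T f).

Definition bounded_op (S : op) : Prop :=
  [/\ (forall f, C0 f -> C0 (S f)),
      (forall (a : R[i]) f g, C0 f -> C0 g ->
          S (fun x => a * f x + g x) = (fun x => a * S f x + S g x)) &
      exists M : R, forall f c, C0 f -> supnorm_le f c ->
          supnorm_le (S f) (M * c)].

Definition is_inverse (S S' : op) : Prop :=
  op_eq (op_comp S S') op_id /\ op_eq (op_comp S' S) op_id.

Definition invertible_op (S : op) : Prop :=
  bounded_op S /\ exists S', bounded_op S' /\ is_inverse S S'.

Definition op_image (S : op) (M : set cfun) : set cfun := S @` M.

Definition Alg (F : set (set cfun)) : set op :=
  [set S | bounded_op S /\ forall M, F M -> forall f, M f -> M (S f)].

Definition Grp (A : set op) : set op :=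
  [set S | A S /\ bounded_op S /\
           exists S', A S' /\ bounded_op S' /\ is_inverse S S'].

Definition Col (F : set (set cfun)) : set op :=
  [set S | invertible_op S /\
     forall M, closed_subspace M -> (F M <-> F (op_image S M))].

Definition supp (f : cfun) : set R := closure [set x | f x != 0].

Definition Nsub (th1 th2 : R -> R) (t : R) : set cfun :=
  [set f | C0 f /\ supp f `<=` `[th1 t, th2 t]].

Definition Nest (th1 th2 : R -> R) : set (set cfun) :=
  [set Nsub th1 th2 t | t in `[0, 1]].

Definition bij_on (A B : set R) (f : R -> R) : Prop :=
  [/\ {in A, forall x, f x \in B},
      {in A &, injective f} &
      forall y, y \in B -> exists2 x, x \in A & f x = y].

Definition incr_on (A : set R) (f : R -> R) : Prop :=
  {in A &, forall x y, x < y -> f x < f y}.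
Definition decr_on (A : set R) (f : R -> R) : Prop :=
  {in A &, forall x y, x < y -> f y < f x}.

Definition Gamma : set (R -> R) :=
  [set phi | bij_on `[-1, 1] `[-1, 1] phi /\ incr_on `[-1, 1] phi].

(* Gamma_{theta1,theta2}([-1,1]) : theta1^{-1} o phi o theta1 and
   theta2^{-1} o phi o theta2 are both defined on [0,1] and coincide:
   for every t in [0,1] there is s in [0,1] (the common value) with
   theta1 s = phi (theta1 t) and theta2 s = phi (theta2 t). *)
Definition Gamma_th (th1 th2 : R -> R) : set (R -> R) :=
  [set phi | Gamma phi /\
     forall t, t \in `[0, 1] ->
       exists2 s, s \in `[0, 1] &
         th1 s = phi (th1 t) /\ th2 s = phi (th2 t)].

Definition inv_on_I (phi psi : R -> R) : Prop :=
  {in `[-1, 1], forall x, psi (phi x) = x} /\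
  {in `[-1, 1], forall x, phi (psi x) = x}.

Definition Vop (phi : R -> R) : op :=
  fun f x => if x \in `[-1, 1] then f (phi x) else 0.

Definition Orb (th1 th2 : R -> R) : set op :=
  [set T | exists2 phi, Gamma_th th1 th2 phi & op_eq T (Vop phi)].

End Defs.

(* Main.v *)
Require Import Defs.
From mathcomp Require Import all_boot all_order all_algebra.
From mathcomp Require Import all_classical all_reals all_analysis.
From mathcomp.real_closed Require Import complex.
From mathcomp.algebra_tactics Require Import ring lra.
Import Order.TTheory GRing.Theory Num.Theory numFieldNormedType.Exports.
Local Open Scope ring_scope.
Local Open Scope classical_set_scope.
Local Open Scope complex_scope.
Set Implicit Arguments.
Unset Strict Implicit.
Unset Printing Implicit Defensive.

Section P1.
Variable R : realType.
Implicit Types (z w : R[i]) (f g : cfun R).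

Definition nC z : R := complex.Re `|z|.

Lemma normCE z : `|z| = (nC z)%:C.
Proof. by rewrite /nC normc_def. Qed.

Lemma nC_ge0 z : 0 <= nC z.
Proof. by rewrite -ler0c -normCE. Qed.

Lemma nCD z w : nC (z + w) <= nC z + nC w.
Proof. by rewrite -lecR rmorphD /= -!normCE ler_normD. Qed.

Lemma nCM z w : nC (z * w) = nC z * nC w.
Proof. by apply: (@complexI R); rewrite rmorphM /= -!normCE normrM. Qed.

Lemma nCN z : nC (- z) = nC z.
Proof. by rewrite /nC normrN. Qed.

Lemma nCB z w : nC (z - w) = nC (w - z).
Proof. by rewrite -nCN opprB. Qed.

Lemma nC_eq0 z : (nC z == 0) = (z == 0).
Proof.
rewrite -[RHS]normr_eq0 normCE.
by rewrite [X in _ = (_ == X)](_ : 0 = (0:R)%:C) // (inj_eq (@complexI R)).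
Qed.

Lemma nC_real (x : R) : nC x%:C = `|x|.
Proof.
rewrite /nC normc_def /=.
by rewrite expr0n /= addr0 sqrtr_sqr.
Qed.

Lemma ltC z (e : R) : (`|z| < e%:C) = (nC z < e).
Proof. by rewrite normCE ltcR. Qed.

Lemma leC z (e : R) : (`|z| <= e%:C) = (nC z <= e).
Proof. by rewrite normCE lecR. Qed.

Lemma ltCl z (e : R) : `|z| < e%:C -> nC z < e. Proof. by rewrite ltC. Qed.
Lemma ltCr z (e : R) : nC z < e -> `|z| < e%:C. Proof. by rewrite ltC. Qed.
Lemma leCl z (e : R) : `|z| <= e%:C -> nC z <= e. Proof. by rewrite leC. Qed.
Lemma leCr z (e : R) : nC z <= e -> `|z| <= e%:C. Proof. by rewrite leC. Qed.

Lemma small_eq0 z : (forall e : R, 0 < e -> nC z < e) -> z = 0.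
Proof.
move=> H; apply/eqP; rewrite -nC_eq0 eq_le nC_ge0 andbT.
apply/ler_addgt0Pr => e e0; rewrite add0r; exact/ltW/H.
Qed.

End P1.

Section P2.
Variable R : realType.
Implicit Types (z w : R[i]) (f g : cfun R).

Lemma cont_comb (a : R[i]) f g : cont_on_I f -> cont_on_I g ->
  cont_on_I (fun x => a * f x + g x).
Proof.
move=> cf cg x xI e e0.
set k := nC a.
have k0 : 0 <= k by exact: nC_ge0.
have e1p : 0 < e / 2 / (k + 1) by rewrite divr_gt0 // ?divr_gt0 // ltr_pwDr.
have e2p : 0 < e / 2 by rewrite divr_gt0.
have [d1 d10 H1] := cf x xI _ e1p.
have [d2 d20 H2] := cg x xI _ e2p.
exists (Num.min d1 d2); first by rewrite lt_min d10 d20.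
move=> y yI; rewrite lt_min => /andP[yd1 yd2].
have /ltCl h1 := H1 y yI yd1; have /ltCl h2 := H2 y yI yd2.
apply: ltCr.
have -> : a * f y + g y - (a * f x + g x) = a * (f y - f x) + (g y - g x) by ring.
apply: (le_lt_trans (nCD _ _)); rewrite nCM -/k.
have h3 : k * nC (f y - f x) <= e / 2.
  apply: (@le_trans _ _ (k * (e / 2 / (k + 1)))).
    by rewrite ler_wpM2l // ltW.
  rewrite mulrA ler_pdivrMr ?ltr_pwDr //.
  nra.
lra.
Qed.

Lemma C0_comb (a : R[i]) f g : C0 f -> C0 g -> C0 (fun x => a * f x + g x).
Proof.
move=> [cf [f1 [f2 f3]]] [cg [g1 [g2 g3]]]; split; first exact: cont_comb.
split; first by rewrite f1 g1 mulr0 addr0.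
split; first by rewrite f2 g2 mulr0 addr0.
by move=> x xI; rewrite f3 // g3 // mulr0 addr0.
Qed.

Lemma C0_0 : C0 (fun=> 0 : R[i]).
Proof.
split; last by [].
move=> x _ e e0; exists 1 => // y _ _; by apply: ltCr; rewrite subrr (_ : 0 = (0:R)%:C) // nC_real normr0.
Qed.

Lemma C0_out f (x : R) : C0 f -> x \notin `[-1, 1] -> f x = 0.
Proof. by move=> [_ [_ [_ h]]]; apply: h. Qed.

End P2.

Lemma inI_itv (R : realType) (a b x : R) : (x \in `[a, b]) = (a <= x <= b).
Proof.
apply/idP/idP => [/set_mem|h]; first by rewrite /= in_itv.
by apply/mem_set; rewrite /= in_itv.
Qed.

Section P3.
Variable R : realType.
Implicit Types (phi psi : R -> R) (x y : R).

Lemma I_m1 : (-1 : R) \in `[-1, 1].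
Proof. by rewrite inI_itv; apply/andP; split; lra. Qed.
Lemma I_1 : (1 : R) \in `[-1, 1].
Proof. by rewrite inI_itv; apply/andP; split; lra. Qed.
Lemma I_0 : (0 : R) \in `[-1, 1].
Proof. by rewrite inI_itv; apply/andP; split; lra. Qed.

Lemma Gm_in phi x : Gamma phi -> x \in `[-1, 1] -> phi x \in `[-1, 1].
Proof. by move=> [[h _ _] _]; apply: h. Qed.

Lemma Gm_lt phi x y : Gamma phi -> x \in `[-1, 1] -> y \in `[-1, 1] ->
  (phi x < phi y) = (x < y).
Proof.
move=> [[_ inj _] inc] xI yI; apply/idP/idP; last exact: inc.
move=> h; rewrite ltNge; apply/negP; rewrite le_eqVlt => /orP[/eqP e|].
  by move: h; rewrite e ltxx.
by move/(inc _ _ yI xI) => h'; move: (lt_trans h h'); rewrite ltxx.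
Qed.

Lemma Gm_le phi x y : Gamma phi -> x \in `[-1, 1] -> y \in `[-1, 1] ->
  (phi x <= phi y) = (x <= y).
Proof.
move=> G xI yI; by rewrite !leNgt Gm_lt.
Qed.

Lemma Gm_inj phi x y : Gamma phi -> x \in `[-1, 1] -> y \in `[-1, 1] ->
  phi x = phi y -> x = y.
Proof. by move=> [[_ inj _] _] xI yI; apply: inj. Qed.

Lemma Gm_surj phi y : Gamma phi -> y \in `[-1, 1] ->
  exists2 x, x \in `[-1, 1] & phi x = y.
Proof. by move=> [[_ _ s] _]; apply: s. Qed.

Lemma Gm_m1 phi : Gamma phi -> phi (-1) = -1.
Proof.
move=> G; have [x xI px] := Gm_surj G I_m1.
have := Gm_in G I_m1; rewrite inI_itv => /andP[h1 _].
apply/eqP; rewrite eq_le h1 andbT -[X in _ <= X]px (Gm_le G I_m1 xI).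
by move: xI; rewrite inI_itv => /andP[].
Qed.

Lemma Gm_1 phi : Gamma phi -> phi 1 = 1.
Proof.
move=> G; have [x xI px] := Gm_surj G I_1.
have := Gm_in G I_1; rewrite inI_itv => /andP[_ h1].
apply/eqP; rewrite eq_le h1 /= -[X in X <= _]px (Gm_le G xI I_1).
by move: xI; rewrite inI_itv => /andP[].
Qed.

Lemma Gamma_id : Gamma (@id R).
Proof.
split; last by move=> x y _ _.
split; [by [] | by move=> x y _ _ | by move=> y yI; exists y].
Qed.

Lemma Gamma_comp phi psi : Gamma phi -> Gamma psi -> Gamma (phi \o psi).
Proof.
move=> Gp Gq; split; last first.
  by move=> x y xI yI xy /=; rewrite Gm_lt ?Gm_in // Gm_lt.
split.
- by move=> x xI /=; rewrite !Gm_in.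
- move=> x y xI yI /= h; apply: (Gm_inj Gq xI yI).
  by apply: (Gm_inj Gp (Gm_in Gq xI) (Gm_in Gq yI)).
- move=> y yI; have [z zI pz] := Gm_surj Gp yI.
  have [x xI qx] := Gm_surj Gq zI.
  by exists x => //=; rewrite qx.
Qed.

Lemma Gm_inv phi : Gamma phi -> exists psi, Gamma psi /\ inv_on_I phi psi.
Proof.
move=> G.
have : forall y, exists x, y \in `[-1, 1] -> x \in `[-1, 1] /\ phi x = y.
  move=> y; have [yI|yI] := boolP (y \in `[-1, 1]).
    by have [x xI px] := Gm_surj G yI; exists x.
  by exists y.
move=> /choice [psi Hpsi].
have pI y : y \in `[-1, 1] -> psi y \in `[-1, 1] by move=> /Hpsi [].
have pK y : y \in `[-1, 1] -> phi (psi y) = y by move=> /Hpsi [].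
have Kp x : x \in `[-1, 1] -> psi (phi x) = x.
  move=> xI; apply: (Gm_inj G (pI _ (Gm_in G xI)) xI).
  by rewrite pK // Gm_in.
exists psi; split; last by split.
split.
  split => //.
  - by move=> y1 y2 y1I y2I h; rewrite -(pK _ y1I) -(pK _ y2I) h.
  - by move=> x xI; exists (phi x); rewrite ?Kp ?Gm_in.
move=> y1 y2 y1I y2I h.
by rewrite -(Gm_lt G) ?pI // !pK.
Qed.

Lemma Gm_cont phi x (e : R) : Gamma phi -> x \in `[-1, 1] -> 0 < e ->
  exists2 d : R, 0 < d & forall y, y \in `[-1, 1] -> `|y - x| < d ->
    `|phi y - phi x| < e.
Proof.
move=> G xI e0.
have pxI := Gm_in G xI.
have [d1 d10 H1] : exists2 d1, 0 < d1 & forall y, y \in `[-1, 1] ->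
    x - d1 < y -> phi x - e < phi y.
  have [lt1|ge1] := ltP (phi x - e) (-1).
    exists 1 => // y yI _; apply: (lt_le_trans lt1).
    by move: (Gm_in G yI); rewrite inI_itv => /andP[].
  have vI : phi x - e \in `[-1, 1].
    rewrite inI_itv ge1 /=; move: pxI; rewrite inI_itv => /andP[_ h].
    by apply: le_trans h; rewrite lerBlDr lerDl ltW.
  have [z zI pz] := Gm_surj G vI.
  have zx : z < x by rewrite -(Gm_lt G) // pz ltrBlDr ltrDl.
  exists (x - z); first by rewrite subr_gt0.
  move=> y yI; rewrite opprB addrC subrK => zy.
  by rewrite -pz Gm_lt.
have [d2 d20 H2] : exists2 d2, 0 < d2 & forall y, y \in `[-1, 1] ->
    y < x + d2 -> phi y < phi x + e.
  have [lt1|ge1] := ltP 1 (phi x + e).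
    exists 1 => // y yI _; apply: (le_lt_trans _ lt1).
    by move: (Gm_in G yI); rewrite inI_itv => /andP[].
  have vI : phi x + e \in `[-1, 1].
    rewrite inI_itv ge1 andbT; move: pxI; rewrite inI_itv => /andP[h _].
    by apply: (le_trans h); rewrite lerDl ltW.
  have [z zI pz] := Gm_surj G vI.
  have zx : x < z by rewrite -(Gm_lt G) // pz ltrDl.
  exists (z - x); first by rewrite subr_gt0.
  move=> y yI; rewrite addrC subrK => zy.
  by rewrite -pz Gm_lt.
exists (Num.min d1 d2); first by rewrite lt_min d10 d20.
move=> y yI; rewrite lt_min => /andP[h1 h2].
have m1 : Num.min d1 d2 <= d1 by rewrite ge_min lexx.
have m2 : Num.min d1 d2 <= d2 by rewrite ge_min lexx orbT.
move: h1 h2; rewrite !ltr_distlC => /andP[a1 a2] /andP[b1 b2].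
apply/andP; split.
  rewrite ltrBlDr; apply: H2 => //; lra.
rewrite -ltrBlDr; apply: H1 => //; lra.
Qed.

End P3.

Section P4.
Variable R : realType.
Implicit Types (phi psi : R -> R) (x y : R) (f g : cfun R).

Definition Z (a b : R) : set (cfun R) :=
  [set f | C0 f /\ forall x, f x != 0 -> a <= x <= b].

Lemma Nsub_Z (th1 th2 : R -> R) t : Nsub th1 th2 t = Z (th1 t) (th2 t).
Proof.
rewrite /Nsub /Z; apply/funext => f; apply/propext; split.
  move=> [C sp]; split => // x fx.
  have : supp f x by apply: subset_closure.
  by move/sp; rewrite /= in_itv.
move=> [C sp]; split => //.
have -> : `[th1 t, th2 t] = closure (`[th1 t, th2 t] : set R).
  by apply/closure_id; exact: itv_closed.
apply: closureS => x /= fx; rewrite in_itv; exact: sp.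
Qed.

Lemma Z_closed (a b : R) : closed_subspace (Z a b).
Proof.
split.
- by move=> f [].
- by split; [exact: C0_0 | move=> x; rewrite eqxx].
- move=> c f g [Cf sf] [Cg sg]; split; first exact: C0_comb.
  move=> x h; have [fx|fx] := eqVneq (f x) 0; last exact: sf.
  have [gx|gx] := eqVneq (g x) 0; last exact: sg.
  by move: h; rewrite fx gx mulr0 addr0 eqxx.
- move=> u g Hu Cg cv; split => // x gx.
  apply/negPn/negP => nab; move/negP: gx; apply.
  apply/eqP; apply: small_eq0 => e e0.
  have [N HN] := cv e e0.
  have /ltCl := HN N (leqnn N) x.
  have -> : u N x = 0.
    have [ux|ux] := eqVneq (u N x) 0 => //.
    by have [_ /(_ x ux)] := Hu N; move/negP: nab.
  by rewrite sub0r nCN.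
Qed.

Lemma lerNnormr (x : R) : - x <= `|x|.
Proof. by rewrite -normrN ler_norm. Qed.

Definition bump (p r : R) : cfun R := fun x => (Num.max 0 (r - `|x - p|))%:C.

Lemma max_lip (A B : R) : `|Num.max 0 A - Num.max 0 B| <= `|A - B|.
Proof.
have h1 : A - B <= `|A - B| by exact: ler_norm.
have h2 : B - A <= `|A - B| by rewrite distrC ler_norm.
rewrite ler_norml; rewrite !maxEle.
case: (leP 0 A) => ha; case: (leP 0 B) => hb; apply/andP; split; lra.
Qed.

Lemma bump_C0 p r : -1 <= p - r -> p + r <= 1 -> C0 (bump p r).
Proof.
move=> h1 h2.
have out x : r <= `|x - p| -> bump p r x = 0.
  move=> h; rewrite /bump maxEle.
  case: leP => [h'|_] //; have -> : r - `|x - p| = 0 by lra.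
  done.
split; [|split; [|split]].
- move=> x _ e e0; exists e => // y _ yx; apply: ltCr.
  rewrite /bump -rmorphB nC_real; apply: (le_lt_trans (max_lip _ _)).
  have -> : r - `|y - p| - (r - `|x - p|) = `|x - p| - `|y - p| by ring.
  apply: (le_lt_trans (ler_dist_dist _ _)).
  rewrite (_ : x - p - (y - p) = - (y - x)); last by ring.
  by rewrite normrN.
- apply: out; apply: (le_trans _ (lerNnormr _)); lra.
- apply: out; apply: (le_trans _ (ler_norm _)); lra.
- move=> x; rewrite inI_itv negb_and -!ltNge => /orP[h|h]; apply: out.
    apply: (le_trans _ (lerNnormr _)); lra.
  apply: (le_trans _ (ler_norm _)); lra.
Qed.

Lemma bump_nz p r x : bump p r x != 0 -> p - r < x < p + r.
Proof.
rewrite /bump maxEle; case: (leP 0 (r - `|x - p|)) => [h|_]; last by move/eqP => hh; exfalso; apply: hh.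
move=> nz; have : 0 < r - `|x - p|.
  rewrite lt_def h andbT; apply/eqP => e; move: nz; rewrite e.
  by move/eqP => hh; exfalso; apply: hh.
by rewrite subr_gt0 distrC ltr_distlC.
Qed.

Lemma bump_p p r : 0 < r -> bump p r p != 0.
Proof.
move=> r0; rewrite /bump subrr normr0 subr0 maxEle; case: (leP 0 r) => h.
  by apply/eqP => -[e]; move: r0; rewrite e ltxx.
by move: h; rewrite ltNge ltW.
Qed.

Lemma Z_le a b c d : -1 <= a -> c <= b -> b <= 1 -> Z a b `<=` Z c d -> c <= a.
Proof.
move=> ha hcb hb sub; rewrite leNgt; apply/negP => ac.
have bz : Z a b (bump ((a + c) / 2) ((c - a) / 2)).
  split; first by apply: bump_C0; lra.
  by move=> x /bump_nz /andP[x1 x2]; apply/andP; split; lra.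
have [_ /(_ ((a + c) / 2))] := sub _ bz.
have /[swap]/[apply] : bump ((a + c) / 2) ((c - a) / 2) ((a + c) / 2) != 0.
  by apply: bump_p; lra.
by move=> /andP[h _]; lra.
Qed.

Lemma Z_ge a b c d : a <= d -> -1 <= a -> b <= 1 -> Z a b `<=` Z c d -> b <= d.
Proof.
move=> had ha hb sub; rewrite leNgt; apply/negP => db.
have bz : Z a b (bump ((d + b) / 2) ((b - d) / 2)).
  split; first by apply: bump_C0; lra.
  by move=> x /bump_nz /andP[x1 x2]; apply/andP; split; lra.
have [_ /(_ ((d + b) / 2))] := sub _ bz.
have /[swap]/[apply] : bump ((d + b) / 2) ((b - d) / 2) ((d + b) / 2) != 0.
  by apply: bump_p; lra.
by move=> /andP[_ h]; lra.
Qed.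

End P4.

Section P5.
Variable R : realType.
Implicit Types (phi psi : R -> R) (x y : R) (f g : cfun R).

Lemma Z_eq (a b c d : R) : -1 <= a -> a <= 0 -> 0 <= b -> b <= 1 ->
  -1 <= c -> c <= 0 -> 0 <= d -> d <= 1 ->
  Z a b = Z c d -> a = c /\ b = d.
Proof.
move=> a1 a2 b1 b2 c1 c2 d1 d2 E.
have s1 : Z a b `<=` Z c d by rewrite E.
have s2 : Z c d `<=` Z a b by rewrite E.
have h1 := Z_le a1 (le_trans c2 b1) b2 s1.
have h2 := Z_le c1 (le_trans a2 d1) d2 s2.
have h3 := Z_ge (le_trans a2 d1) a1 b2 s1.
have h4 := Z_ge (le_trans c2 b1) c1 d2 s2.
by split; apply/eqP; rewrite eq_le ?h1 ?h2 ?h3 ?h4.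
Qed.

Lemma Vop_in phi f x : x \in `[-1, 1] -> Vop phi f x = f (phi x).
Proof. by rewrite /Vop => ->. Qed.

Lemma Vop_out phi f x : x \notin `[-1, 1] -> Vop phi f x = 0.
Proof. by rewrite /Vop => /negbTE ->. Qed.

Lemma Vop_C0 phi f : Gamma phi -> C0 f -> C0 (Vop phi f).
Proof.
move=> G [cf [f1 [f2 f3]]].
split; [|split; [|split]].
- move=> x xI e e0.
  have [d1 d10 H1] := cf _ (Gm_in G xI) e e0.
  have [d d0 H] := Gm_cont G xI d10.
  exists d => // y yI yx.
  by rewrite !Vop_in //; apply: H1; [exact: Gm_in | exact: H].
- by rewrite Vop_in ?I_m1 // Gm_m1.
- by rewrite Vop_in ?I_1 // Gm_1.
- by move=> x xI; rewrite Vop_out.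
Qed.

Lemma Vop_lin phi (a : R[i]) f g :
  Vop phi (fun x => a * f x + g x) = (fun x => a * Vop phi f x + Vop phi g x).
Proof.
apply/funext => x; rewrite /Vop; case: ifP => //.
by rewrite mulr0 addr0.
Qed.

Lemma Vop_bounded phi : Gamma phi -> bounded_op (Vop phi).
Proof.
move=> G; split.
- by move=> f; exact: Vop_C0.
- by move=> a f g _ _; exact: Vop_lin.
exists 1 => f c _ h x; rewrite mul1r.
have [xI|xI] := boolP (x \in `[-1, 1]); first by rewrite Vop_in.
rewrite Vop_out // normr0; exact: le_trans (normr_ge0 _) (h 0).
Qed.

Lemma Vop_comp phi psi f : Gamma phi ->
  Vop phi (Vop psi f) = Vop (psi \o phi) f.
Proof.
move=> G; apply/funext => x; rewrite /Vop.
by case: ifP => // xI; rewrite /= Gm_in.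
Qed.

Lemma Vop_id_eq phi f : C0 f -> {in `[-1, 1], forall x, phi x = x} ->
  Vop phi f = f.
Proof.
move=> Cf h; apply/funext => x; rewrite /Vop.
case: ifP => xI; first by rewrite h.
by rewrite C0_out // xI.
Qed.

Lemma Vop_inv phi psi f : Gamma phi -> inv_on_I phi psi -> C0 f ->
  Vop phi (Vop psi f) = f.
Proof.
move=> G [h1 h2] Cf; rewrite Vop_comp //; apply: Vop_id_eq => // x xI.
Qed.

Lemma inv_on_I_sym phi psi : inv_on_I phi psi -> inv_on_I psi phi.
Proof. by move=> [h1 h2]; split. Qed.

Lemma Vop_is_inverse phi psi : Gamma phi -> Gamma psi -> inv_on_I phi psi ->
  is_inverse (Vop phi) (Vop psi).
Proof.
move=> Gp Gq iv; split => f Cf; rewrite /op_comp /op_id.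
  exact: Vop_inv.
by apply: Vop_inv => //; exact: inv_on_I_sym.
Qed.

Lemma Vop_invertible phi : Gamma phi -> invertible_op (Vop phi).
Proof.
move=> G; split; first exact: Vop_bounded.
have [psi [Gq iv]] := Gm_inv G.
exists (Vop psi); split; first exact: Vop_bounded.
exact: Vop_is_inverse.
Qed.

Lemma Vop_image phi psi (a b c d : R) : Gamma phi -> Gamma psi -> inv_on_I phi psi ->
  c \in `[-1, 1] -> d \in `[-1, 1] -> phi c = a -> phi d = b ->
  Vop phi @` Z a b = Z c d.
Proof.
move=> Gp Gq iv cI dI pc pd.
apply/seteqP; split.
  move=> _ [f [Cf sf] <-]; split; first exact: Vop_C0.
  move=> x; have [xI|xI] := boolP (x \in `[-1, 1]); last by rewrite Vop_out ?eqxx.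
  rewrite Vop_in // => /sf; rewrite -pc -pd !Gm_le //.
move=> g [Cg sg]; exists (Vop psi g); last first.
  by apply: Vop_inv.
split; first exact: Vop_C0.
move=> y; have [yI|yI] := boolP (y \in `[-1, 1]); last by rewrite Vop_out ?eqxx.
have [_ K] := iv.
rewrite Vop_in // => /sg h.
by rewrite -pc -pd -[X in _ <= X <= _](K y yI) !Gm_le // ?Gm_in.
Qed.

Lemma sup_cvg_Vop phi u g : sup_cvg u g ->
  sup_cvg (fun n => Vop phi (u n)) (Vop phi g).
Proof.
move=> cv e e0; have [N HN] := cv e e0; exists N => n nN x.
have [xI|xI] := boolP (x \in `[-1, 1]); first by rewrite !Vop_in // HN.
rewrite !Vop_out // subrr; apply: ltCr; rewrite (_ : 0 = (0:R)%:C) // nC_real normr0 //.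
Qed.

End P5.

Section P6.
Variable R : realType.
Implicit Types (phi psi : R -> R) (x y s t u : R) (f g : cfun R).

Lemma Z_mid (a b c d : R) : -1 <= a -> a < b -> b <= 1 -> Z a b `<=` Z c d ->
  c <= (a + b) / 2 <= d.
Proof.
move=> ha ab hb sub.
have bz : Z a b (bump ((a + b) / 2) ((b - a) / 2)).
  split; first by apply: bump_C0; lra.
  by move=> x /bump_nz /andP[x1 x2]; apply/andP; split; lra.
have [_ /(_ ((a + b) / 2))] := sub _ bz.
apply; apply: bump_p; lra.
Qed.

Lemma Z_eq2 (a b c d : R) : -1 <= a -> a < b -> b <= 1 -> -1 <= c -> d <= 1 ->
  Z a b = Z c d -> a = c /\ b = d.
Proof.
move=> a1 ab b1 c1 d1 E.
have s1 : Z a b `<=` Z c d by rewrite E.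
have s2 : Z c d `<=` Z a b by rewrite E.
have /andP[m1 m2] := Z_mid a1 ab b1 s1.
have h1 : c <= a by apply: (Z_le a1 _ b1 s1); lra.
have h3 : b <= d by apply: (Z_ge _ a1 b1 s1); lra.
have h2 : a <= c by apply: (Z_le c1 _ d1 s2); lra.
have h4 : d <= b by apply: (Z_ge _ c1 d1 s2); lra.
by split; apply/eqP; rewrite eq_le ?h1 ?h2 ?h3 ?h4.
Qed.

Variables th1 th2 : R -> R.
Hypothesis b1 : bij_on `[0, 1] `[-1, 0] th1.
Hypothesis d1 : decr_on `[0, 1] th1.
Hypothesis b2 : bij_on `[0, 1] `[0, 1] th2.
Hypothesis i2 : incr_on `[0, 1] th2.

Lemma K0 : (0 : R) \in `[0, 1]. Proof. by rewrite inI_itv; apply/andP; split; lra. Qed.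
Lemma K1 : (1 : R) \in `[0, 1]. Proof. by rewrite inI_itv; apply/andP; split; lra. Qed.

Lemma th1_rng t : t \in `[0, 1] -> -1 <= th1 t <= 0.
Proof. by move=> tK; case: b1 => h _ _; have := h t tK; rewrite inI_itv. Qed.
Lemma th2_rng t : t \in `[0, 1] -> 0 <= th2 t <= 1.
Proof. by move=> tK; case: b2 => h _ _; have := h t tK; rewrite inI_itv. Qed.

Lemma th1_I t : t \in `[0, 1] -> th1 t \in `[-1, 1].
Proof. move=> /th1_rng; rewrite inI_itv => /andP[h h']; apply/andP; split; lra. Qed.
Lemma th2_I t : t \in `[0, 1] -> th2 t \in `[-1, 1].
Proof. move=> /th2_rng; rewrite inI_itv => /andP[h h']; apply/andP; split; lra. Qed.

Lemma th1_lt s t : s \in `[0, 1] -> t \in `[0, 1] -> (th1 s < th1 t) = (t < s).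
Proof.
move=> sK tK; apply/idP/idP; last exact: d1.
move=> h; rewrite ltNge; apply/negP; rewrite le_eqVlt => /orP[/eqP e|].
  by move: h; rewrite e ltxx.
by move/(d1 sK tK) => h'; move: (lt_trans h h'); rewrite ltxx.
Qed.
Lemma th1_le s t : s \in `[0, 1] -> t \in `[0, 1] -> (th1 s <= th1 t) = (t <= s).
Proof. by move=> sK tK; rewrite !leNgt th1_lt. Qed.
Lemma th2_lt s t : s \in `[0, 1] -> t \in `[0, 1] -> (th2 s < th2 t) = (s < t).
Proof.
move=> sK tK; apply/idP/idP; last exact: i2.
move=> h; rewrite ltNge; apply/negP; rewrite le_eqVlt => /orP[/eqP e|].
  by move: h; rewrite e ltxx.
by move/(i2 tK sK) => h'; move: (lt_trans h h'); rewrite ltxx.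
Qed.
Lemma th2_le s t : s \in `[0, 1] -> t \in `[0, 1] -> (th2 s <= th2 t) = (s <= t).
Proof. by move=> sK tK; rewrite !leNgt th2_lt. Qed.

Lemma th1_inj s t : s \in `[0, 1] -> t \in `[0, 1] -> th1 s = th1 t -> s = t.
Proof. by case: b1 => _ h _; apply: h. Qed.
Lemma th2_inj s t : s \in `[0, 1] -> t \in `[0, 1] -> th2 s = th2 t -> s = t.
Proof. by case: b2 => _ h _; apply: h. Qed.

Lemma th1_0 : th1 0 = 0.
Proof.
case: b1 => _ _ h.
have [s sK e] := h 0 (ltac:(by rewrite inI_itv; apply/andP; split; lra)).
have := th1_rng K0; move=> /andP[_ h0].
have : th1 s <= th1 0 by rewrite (th1_le sK K0); move: sK; rewrite inI_itv => /andP[].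
rewrite e => h'; apply/eqP; by rewrite eq_le h0 h'.
Qed.
Lemma th2_0 : th2 0 = 0.
Proof.
case: b2 => _ _ h.
have [s sK e] := h 0 (ltac:(by rewrite inI_itv; apply/andP; split; lra)).
have := th2_rng K0; move=> /andP[h0 _].
have : th2 0 <= th2 s by rewrite (th2_le K0 sK); move: sK; rewrite inI_itv => /andP[].
rewrite e => h'; apply/eqP; by rewrite eq_le h0 h'.
Qed.

Lemma th1_surj y : -1 <= y <= 0 -> exists2 t, t \in `[0, 1] & th1 t = y.
Proof. by case: b1 => _ _ h yr; apply: h; rewrite inI_itv. Qed.
Lemma th2_surj y : 0 <= y <= 1 -> exists2 t, t \in `[0, 1] & th2 t = y.
Proof. by case: b2 => _ _ h yr; apply: h; rewrite inI_itv. Qed.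

Lemma th1_eq0 t : t \in `[0, 1] -> th1 t = 0 -> t = 0.
Proof. by move=> tK e; apply: th1_inj => //; [exact: K0 | rewrite th1_0]. Qed.
Lemma th2_eq0 t : t \in `[0, 1] -> th2 t = 0 -> t = 0.
Proof. by move=> tK e; apply: th2_inj => //; [exact: K0 | rewrite th2_0]. Qed.

Lemma th_lt t : t \in `[0, 1] -> 0 < t -> th1 t < th2 t.
Proof.
move=> tK t0.
have h1 : th1 t < th1 0 by rewrite th1_lt // K0.
have h2 : th2 0 < th2 t by rewrite th2_lt // K0.
by move: h1 h2; rewrite th1_0 th2_0; lra.
Qed.

Local Notation N := (Nsub th1 th2).

Lemma Nsub_eq s t : s \in `[0, 1] -> t \in `[0, 1] -> N s = N t -> s = t.
Proof.
move=> sK tK; rewrite !Nsub_Z => E.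
have /andP[s1 s2] := th1_rng sK; have /andP[s3 s4] := th2_rng sK.
have /andP[t1 t2] := th1_rng tK; have /andP[t3 t4] := th2_rng tK.
by have [/(th1_inj sK tK) -> _] := Z_eq s1 s2 s3 s4 t1 t2 t3 t4 E.
Qed.

Lemma Nsub_le s t : s \in `[0, 1] -> t \in `[0, 1] -> N s `<=` N t -> s <= t.
Proof.
move=> sK tK; rewrite !Nsub_Z => E.
have /andP[s1 s2] := th1_rng sK; have /andP[s3 s4] := th2_rng sK.
have /andP[t1 t2] := th1_rng tK; have /andP[t3 t4] := th2_rng tK.
rewrite -th2_le //; apply: (Z_ge _ s1 s4 E); lra.
Qed.

Lemma Nsub_mono s t : s \in `[0, 1] -> t \in `[0, 1] -> s <= t -> N s `<=` N t.
Proof.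
move=> sK tK st; rewrite !Nsub_Z => f [Cf sf]; split => // x /sf /andP[h1 h2].
have : th1 t <= th1 s by rewrite th1_le.
have : th2 s <= th2 t by rewrite th2_le.
move=> h3 h4; apply/andP; split; lra.
Qed.

Lemma Nsub_closed t : closed_subspace (N t).
Proof. rewrite Nsub_Z; exact: Z_closed. Qed.

Lemma Nest_P M : Nest th1 th2 M <-> exists2 t, t \in `[0, 1] & M = N t.
Proof.
split; first by move=> [t tK <-]; exists t => //; apply/mem_set.
by move=> [t tK ->]; exists t => //; apply/set_mem.
Qed.

Lemma Gth_0 phi : Gamma_th th1 th2 phi -> phi 0 = 0.
Proof.
move=> [G H]; have [s sK [e1 e2]] := H 0 K0.
move: e1 e2; rewrite th1_0 th2_0 => e1 e2.
have /andP[_ h1] := th1_rng sK; have /andP[h2 _] := th2_rng sK.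
by apply/eqP; rewrite eq_le -{1}e1 -e2 h1 h2.
Qed.

Lemma Gth_id : Gamma_th th1 th2 id.
Proof. by split; [exact: Gamma_id | move=> t tK; exists t]. Qed.

Lemma Gth_comp phi psi : Gamma_th th1 th2 phi -> Gamma_th th1 th2 psi ->
  Gamma_th th1 th2 (phi \o psi).
Proof.
move=> [Gp Hp] [Gq Hq]; split; first exact: Gamma_comp.
move=> t tK; have [s sK [e1 e2]] := Hq t tK.
have [s' s'K [e3 e4]] := Hp s sK.
by exists s' => //=; rewrite -e1 -e2.
Qed.

Lemma Gth_inv phi psi : Gamma_th th1 th2 phi -> Gamma psi ->
  inv_on_I phi psi -> Gamma_th th1 th2 psi.
Proof.
move=> [Gp Hp] Gq [K1' K2']; split => // t tK.
have p0 : phi 0 = 0 by apply: Gth_0.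
have q0 : psi 0 = 0 by rewrite -{1}p0 K1' // I_0.
have xr : -1 <= psi (th1 t) <= 0.
  have := Gm_in Gq (th1_I tK); rewrite inI_itv => /andP[h _].
  rewrite h /= -q0 Gm_le ?I_0 ?th1_I //.
  by have /andP[] := th1_rng tK.
have [u uK eu] := th1_surj xr.
have [s sK [e1 e2]] := Hp u uK.
have st : s = t.
  by apply: th1_inj => //; rewrite e1 eu K2' // th1_I.
exists u => //; split => //.
by rewrite -st e2 K1' // th2_I.
Qed.

Lemma Vop_Nsub_gen phi psi t u : Gamma phi -> Gamma psi -> inv_on_I phi psi ->
  t \in `[0, 1] -> u \in `[0, 1] ->
  phi (th1 u) = th1 t -> phi (th2 u) = th2 t -> Vop phi @` N t = N u.
Proof.
move=> Gp Gq iv tK uK e1 e2; rewrite !Nsub_Z.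
exact: (Vop_image Gp Gq iv (th1_I uK) (th2_I uK) e1 e2).
Qed.

End P6.

Section P7.
Variable R : realType.
Implicit Types (S T A : op R) (f g : cfun R) (M X : set (cfun R)).

Lemma Sop0 S : bounded_op S -> S (fun=> 0) = (fun=> 0).
Proof.
move=> [_ lin _].
have := lin 1 (fun=> 0) (fun=> 0) (@C0_0 R) (@C0_0 R).
have -> : (fun _ : R => 1 * 0 + 0) = (fun=> 0 : R[i]) by apply/funext => x; rewrite mulr0 addr0.
move=> h; apply/funext => x.
have := congr1 (fun F => F x) h; rewrite /= mul1r => e.
by apply: (addrI (S (fun=> 0) x)); rewrite addr0 -e.
Qed.

Lemma image_ext S T M : op_eq S T -> M `<=` @C0 R -> S @` M = T @` M.
Proof.
move=> E sub; apply/seteqP; split => _ [f Mf <-]; exists f => //.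
  by rewrite E //; exact: sub.
by rewrite E //; exact: sub.
Qed.

Lemma bounded_ext S T : op_eq S T -> bounded_op T -> bounded_op S.
Proof.
move=> E [h1 h2 [m hm]]; split.
- by move=> f Cf; rewrite E //; exact: h1.
- move=> a f g Cf Cg; by rewrite (E _ (C0_comb a Cf Cg)) h2 // (E _ Cf) (E _ Cg).
- by exists m => f c Cf hc; rewrite E //; exact: hm.
Qed.

Lemma is_inverse_ext S T T' : op_eq S T -> bounded_op T' -> is_inverse T T' ->
  is_inverse S T'.
Proof.
move=> E [h1 _ _] [i1 i2]; split => f Cf; rewrite /op_comp.
  by rewrite (E _ (h1 _ Cf)); exact: (i1 f Cf).
by rewrite (E _ Cf); exact: (i2 f Cf).
Qed.

Lemma invertible_ext S T : op_eq S T -> invertible_op T -> invertible_op S.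
Proof.
move=> E [bT [T' [bT' iv]]]; split; first exact: bounded_ext bT.
by exists T'; split => //; apply: is_inverse_ext iv.
Qed.

Lemma Col_ext F S T : op_eq S T -> Col F T -> Col F S.
Proof.
move=> E [iT H]; split; first exact: invertible_ext iT.
move=> M cM; rewrite /op_image (image_ext E); first exact: H.
by case: cM.
Qed.

Lemma bounded_comp S T : bounded_op S -> bounded_op T -> bounded_op (op_comp S T).
Proof.
move=> [s1 s2 [ms hs]] [t1 t2 [mt ht]]; split.
- by move=> f Cf; apply: s1; apply: t1.
- by move=> a f g Cf Cg; rewrite /op_comp t2 // s2 //; apply: t1.
- exists (ms * mt) => f c Cf hc; rewrite /op_comp -mulrA.
  by apply: hs; [apply: t1 | apply: ht].
Qed.

Lemma is_inverse_comp A A' T T' : bounded_op A' -> bounded_op T ->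
  is_inverse A A' -> is_inverse T T' ->
  is_inverse (op_comp A T) (op_comp T' A').
Proof.
move=> [a1 _ _] [t1 _ _] [i1 i2] [j1 j2]; split => f Cf; rewrite /op_comp.
  by have := j1 _ (a1 _ Cf); rewrite /op_comp => ->; exact: i1.
by have := i2 _ (t1 _ Cf); rewrite /op_comp => ->; exact: j2.
Qed.

Lemma bounded_cvg S u g : bounded_op S -> (forall n, C0 (u n)) -> C0 g ->
  sup_cvg u g -> sup_cvg (fun n => S (u n)) (S g).
Proof.
move=> [s1 s2 [m hm]] Cu Cg cv e e0.
have k0 : 0 < `|m| + 1 by rewrite ltr_pwDr.
have e'0 : 0 < e / (`|m| + 1) by rewrite divr_gt0.
have [N HN] := cv _ e'0; exists N => n nN x.
have C' : C0 (fun y => (-1) * g y + u n y) by exact: C0_comb.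
have hb : supnorm_le (fun y => (-1) * g y + u n y) (e / (`|m| + 1)).
  move=> y; apply: leCr; apply: ltW; apply: ltCl.
  by rewrite mulN1r addrC; exact: HN.
have := hm _ _ C' hb x; rewrite s2 //= mulN1r addrC => /leCl h.
apply: ltCr; apply: (le_lt_trans h).
have hm' : m <= `|m| by exact: ler_norm.
rewrite mulrA ltr_pdivrMr // [e * _]mulrC ltr_pM2r //; lra.
Qed.

Lemma preimage_closed S M : bounded_op S -> closed_subspace M ->
  closed_subspace [set g | C0 g /\ M (S g)].
Proof.
move=> bS [m1 m2 m3 m4]; have [s1 s2 _] := bS.
split.
- by move=> g [].
- by split; [exact: (@C0_0 R) | rewrite Sop0].
- move=> a f g [Cf Mf] [Cg Mg]; split; first exact: C0_comb.
  by rewrite s2 //; apply: m3.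
- move=> u g Hu Cg cv; split => //.
  apply: (m4 (fun n => S (u n))) => //.
  + by move=> n; case: (Hu n).
  + exact: s1.
  + by apply: bounded_cvg => // n; case: (Hu n).
Qed.

Lemma image_back S S' X : is_inverse S S' -> X `<=` @C0 R -> S' @` (S @` X) = X.
Proof.
move=> [_ i2] sub; apply/seteqP; split.
  move=> _ [_ [f Xf <-] <-]; have := i2 f (sub _ Xf); rewrite /op_comp => ->.
  done.
move=> f Xf; exists (S f); first by exists f.
by have := i2 f (sub _ Xf).
Qed.

End P7.

Section P8.
Variable R : realType.
Implicit Types (phi psi : R -> R) (x y s t u : R) (f g : cfun R) (S T A : op R).
Variables th1 th2 : R -> R.
Hypothesis b1 : bij_on `[0, 1] `[-1, 0] th1.
Hypothesis d1 : decr_on `[0, 1] th1.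
Hypothesis b2 : bij_on `[0, 1] `[0, 1] th2.
Hypothesis i2 : incr_on `[0, 1] th2.

Local Notation N := (Nsub th1 th2).
Local Notation NN := (Nest th1 th2).

Lemma N_C0 t : N t `<=` @C0 R.
Proof. by case: (Nsub_closed th1 th2 t). Qed.

Lemma Vop_Nest phi (M : set (cfun R)) : Gamma_th th1 th2 phi -> M `<=` @C0 R ->
  (NN M <-> NN (Vop phi @` M)).
Proof.
move=> Gt sub; have Gp := Gt.1; have [psi [Gq iv]] := Gm_inv Gp.
have Gtq := Gth_inv b1 d1 b2 i2 Gt Gq iv.
have [K1 K2] := iv.
split.
- move/(Nest_P _ _) => [t tK ->].
  have [u uK [e1 e2]] := Gtq.2 t tK.
  apply/(Nest_P _ _); exists u => //.
  apply: (Vop_Nsub_gen b1 b2 Gp Gq iv tK uK).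
    by rewrite e1 K2 // (th1_I b1 tK).
  by rewrite e2 K2 // (th2_I b2 tK).
- move/(Nest_P _ _) => [t tK E].
  have [s sK [e1 e2]] := Gt.2 t tK.
  apply/(Nest_P _ _); exists s => //.
  rewrite -(image_back (Vop_is_inverse Gp Gq iv) sub) E.
  apply: (Vop_Nsub_gen b1 b2 Gq Gp (inv_on_I_sym iv) tK sK).
    by rewrite e1 K1 // (th1_I b1 tK).
  by rewrite e2 K1 // (th2_I b2 tK).
Qed.

Lemma Col_of_Gth phi : Gamma_th th1 th2 phi -> Col NN (Vop phi).
Proof.
move=> Gt; split; first exact: Vop_invertible Gt.1.
by move=> M [sub _ _ _]; exact: Vop_Nest.
Qed.

Lemma Gth_of_Col phi : Gamma phi -> Col NN (Vop phi) -> Gamma_th th1 th2 phi.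
Proof.
move=> Gp [_ H]; have [psi [Gq iv]] := Gm_inv Gp; have [K1 K2] := iv.
have key : forall t, t \in `[0, 1] -> 0 < t ->
    exists2 s, s \in `[0, 1] & th1 s = phi (th1 t) /\ th2 s = phi (th2 t).
  move=> t tK t0.
  pose M := [set g | C0 g /\ N t (Vop phi g)].
  have cM : closed_subspace M := preimage_closed (Vop_bounded Gp) (Nsub_closed _ _ t).
  have img : Vop phi @` M = N t.
    apply/seteqP; split; first by move=> _ [g [_ h] <-].
    move=> h Nh; have Ch := N_C0 Nh.
    exists (Vop psi h); last exact: Vop_inv.
    by split; [exact: Vop_C0 | rewrite Vop_inv].
  have : NN M by apply/(H M cM); rewrite /op_image img; apply/(Nest_P _ _); exists t.
  move/(Nest_P _ _) => [s sK Ms].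
  rewrite Ms in img.
  have cI := Gm_in Gq (th1_I b1 sK); have dI := Gm_in Gq (th2_I b2 sK).
  have := Vop_image Gp Gq iv cI dI (K2 _ (th1_I b1 sK)) (K2 _ (th2_I b2 sK)).
  rewrite -Nsub_Z img Nsub_Z => E.
  have /andP[a1 _] := th1_rng b1 tK; have /andP[_ bb1] := th2_rng b2 tK.
  move: cI dI; rewrite !inI_itv => /andP[c1 _] /andP[_ dd1].
  have [ea eb] := Z_eq2 a1 (th_lt b1 d1 b2 i2 tK t0) bb1 c1 dd1 E.
  exists s => //; split.
    by rewrite ea K2 // (th1_I b1 sK).
  by rewrite eb K2 // (th2_I b2 sK).
have neg x : x \in `[-1, 1] -> x < 0 -> phi x <= 0.
  move=> xI x0.
  have [t tK et] : exists2 t, t \in `[0, 1] & th1 t = x.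
    by apply: th1_surj => //; move: xI; rewrite inI_itv => /andP[h _]; rewrite h ltW.
  have t0 : 0 < t.
    rewrite lt_def; move: tK; rewrite inI_itv => /andP[-> _]; rewrite andbT.
    by apply/eqP => e; move: x0; rewrite -et e (th1_0 b1 d1) ltxx.
  have [s sK [e1 _]] := key t tK t0.
  by rewrite -et -e1; have /andP[] := th1_rng b1 sK.
have pos x : x \in `[-1, 1] -> 0 < x -> 0 <= phi x.
  move=> xI x0.
  have [t tK et] : exists2 t, t \in `[0, 1] & th2 t = x.
    by apply: th2_surj => //; move: xI; rewrite inI_itv => /andP[_ h]; rewrite h ltW.
  have t0 : 0 < t.
    rewrite lt_def; move: tK; rewrite inI_itv => /andP[-> _]; rewrite andbT.
    by apply/eqP => e; move: x0; rewrite -et e (th2_0 b2 i2) ltxx.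
  have [s sK [_ e2]] := key t tK t0.
  by rewrite -et -e2; have /andP[] := th2_rng b2 sK.
have p0 : phi 0 = 0.
  have := Gm_in Gp (@I_0 R); rewrite inI_itv => /andP[l1 l2].
  have [hlt|hgt|//] := ltgtP (phi 0) 0.
    have yI : phi 0 / 2 \in `[-1, 1] by rewrite inI_itv; apply/andP; split; lra.
    have [z zI pz] := Gm_surj Gp yI.
    have z0 : 0 < z by rewrite -(Gm_lt Gp) ?(@I_0 R) // pz; lra.
    by have := pos z zI z0; rewrite pz; lra.
  have yI : phi 0 / 2 \in `[-1, 1] by rewrite inI_itv; apply/andP; split; lra.
  have [z zI pz] := Gm_surj Gp yI.
  have z0 : z < 0 by rewrite -(Gm_lt Gp) ?(@I_0 R) // pz; lra.
  by have := neg z zI z0; rewrite pz; lra.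
split => // t tK.
have [t0|t0] := eqVneq t 0.
  by exists 0; [exact: (@K0 R) | rewrite t0 (th1_0 b1 d1) (th2_0 b2 i2) p0].
apply: key => //; rewrite lt_def t0 /=.
by move: tK; rewrite inI_itv => /andP[].
Qed.

End P8.

Section P9.
Variable R : realType.
Implicit Types (phi psi : R -> R) (x y s t u : R) (f g : cfun R) (S T A : op R).
Variables th1 th2 : R -> R.
Hypothesis b1 : bij_on `[0, 1] `[-1, 0] th1.
Hypothesis d1 : decr_on `[0, 1] th1.
Hypothesis b2 : bij_on `[0, 1] `[0, 1] th2.
Hypothesis i2 : incr_on `[0, 1] th2.

Local Notation N := (Nsub th1 th2).
Local Notation NN := (Nest th1 th2).

Lemma Alg_eq A A' t : Alg NN A -> Alg NN A' -> is_inverse A A' ->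
  t \in `[0, 1] -> A @` N t = N t.
Proof.
move=> [_ hA] [_ hA'] [i1 _] tK.
have Nt : NN (N t) by apply/(Nest_P _ _); exists t.
apply/seteqP; split; first by move=> _ [f Nf <-]; exact: hA.
move=> h Nh; exists (A' h); first exact: hA'.
exact: (i1 h (N_C0 Nh)).
Qed.

Lemma Grp_Nest A (X : set (cfun R)) : Grp (Alg NN) A -> X `<=` @C0 R ->
  (NN X <-> NN (A @` X)).
Proof.
move=> [aA [bA [A' [aA' [bA' [j1 j2]]]]]] sub.
split.
- move/(Nest_P _ _) => [t tK ->]; apply/(Nest_P _ _); exists t => //.
  exact: (Alg_eq aA aA' (conj j1 j2)).
- move/(Nest_P _ _) => [t tK E]; apply/(Nest_P _ _); exists t => //.
  rewrite -(image_back (conj j1 j2) sub) E.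
  exact: (Alg_eq aA' aA (conj j2 j1)).
Qed.

Lemma image_comp A T (M : set (cfun R)) : op_comp A T @` M = A @` (T @` M).
Proof.
apply/seteqP; split; first by move=> _ [f Mf <-]; exists (T f) => //; exists f.
by move=> _ [_ [f Mf <-] <-]; exists f.
Qed.

Lemma Col_decomp_r S A T : Grp (Alg NN) A -> Orb th1 th2 T ->
  op_eq S (op_comp A T) -> Col NN S.
Proof.
move=> GA [phi Gt ET] ES.
have Gp := Gt.1; have [psi [Gq iv]] := Gm_inv Gp.
have [aA [bA [A' [aA' [bA' iA]]]]] := GA.
apply: (@Col_ext _ _ _ (op_comp A (Vop phi))).
  move=> f Cf; rewrite ES // /op_comp ET //.
split.
  split; first exact: bounded_comp bA (Vop_bounded Gp).
  exists (op_comp (Vop psi) A'); split.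
    exact: bounded_comp (Vop_bounded Gq) bA'.
  exact: is_inverse_comp bA' (Vop_bounded Gp) iA (Vop_is_inverse Gp Gq iv).
move=> M [sub _ _ _]; rewrite /op_image image_comp.
rewrite (Vop_Nest b1 d1 b2 i2 Gt sub).
apply: Grp_Nest => //.
by move=> _ [f Mf <-]; apply: Vop_C0 => //; exact: sub.
Qed.

Lemma Grp_Orb_id T : Grp (Alg NN) T -> Orb th1 th2 T -> op_eq T (@op_id R).
Proof.
move=> [aT [bT [T' [aT' [bT' iT]]]]] [phi Gt ET].
have Gp := Gt.1; have [psi [Gq iv]] := Gm_inv Gp; have [K1 K2] := iv.
have fix_t t : t \in `[0, 1] -> 0 < t -> psi (th1 t) = th1 t /\ psi (th2 t) = th2 t.
  move=> tK t0.
  have E1 : Vop phi @` N t = N t.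
    by rewrite -(image_ext ET (@N_C0 _ _ _ t)); exact: (Alg_eq aT aT' iT).
  have cI := Gm_in Gq (th1_I b1 tK); have dI := Gm_in Gq (th2_I b2 tK).
  have := Vop_image Gp Gq iv cI dI (K2 _ (th1_I b1 tK)) (K2 _ (th2_I b2 tK)).
  rewrite -Nsub_Z E1 Nsub_Z => E.
  have /andP[a1 _] := th1_rng b1 tK; have /andP[_ bb1] := th2_rng b2 tK.
  move: cI dI; rewrite !inI_itv => /andP[c1 _] /andP[_ dd1].
  have [ea eb] := Z_eq2 a1 (th_lt b1 d1 b2 i2 tK t0) bb1 c1 dd1 E.
  by split.
have fixp x : x \in `[-1, 1] -> phi x = x.
  move=> xI; have [x0|x0|->] := ltgtP x 0; last exact: (Gth_0 b1 d1 b2 i2 Gt).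
  - have [t tK et] : exists2 t, t \in `[0, 1] & th1 t = x.
      by apply: th1_surj => //; move: xI; rewrite inI_itv => /andP[h _]; rewrite h ltW.
    have t0 : 0 < t.
      rewrite lt_def; move: tK; rewrite inI_itv => /andP[-> _]; rewrite andbT.
      by apply/eqP => e; move: x0; rewrite -et e (th1_0 b1 d1) ltxx.
    have [e1 _] := fix_t t tK t0.
    by rewrite -{1}et -e1 K2 // et.
  - have [t tK et] : exists2 t, t \in `[0, 1] & th2 t = x.
      by apply: th2_surj => //; move: xI; rewrite inI_itv => /andP[_ h]; rewrite h ltW.
    have t0 : 0 < t.
      rewrite lt_def; move: tK; rewrite inI_itv => /andP[-> _]; rewrite andbT.
      by apply/eqP => e; move: x0; rewrite -et e (th2_0 b2 i2) ltxx.
    have [_ e2] := fix_t t tK t0.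
    by rewrite -{1}et -e2 K2 // et.
move=> f Cf; rewrite ET //; exact: Vop_id_eq.
Qed.

Lemma Orb_Col T : Orb th1 th2 T -> Col NN T.
Proof. by move=> [phi Gt ET]; apply: Col_ext ET _; exact: Col_of_Gth. Qed.

Lemma Orb_id : Orb th1 th2 (@op_id R).
Proof.
exists id; first exact: Gth_id.
by move=> f Cf; rewrite /op_id Vop_id_eq.
Qed.

Lemma Orb_comp S T : Orb th1 th2 S -> Orb th1 th2 T -> Orb th1 th2 (op_comp S T).
Proof.
move=> [phi Gp ES] [psi Gq ET].
exists (psi \o phi); first exact: Gth_comp.
move=> f Cf; rewrite /op_comp ET // ES; last exact: Vop_C0 Gq.1 Cf.
exact: Vop_comp Gp.1.
Qed.

Lemma Orb_inv T : Orb th1 th2 T -> exists2 T', Orb th1 th2 T' & is_inverse T T'.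
Proof.
move=> [phi Gt ET]; have Gp := Gt.1; have [psi [Gq iv]] := Gm_inv Gp.
exists (Vop psi).
  exists psi; last by [].
  exact: (Gth_inv b1 d1 b2 i2 Gt Gq iv).
apply: is_inverse_ext ET (Vop_bounded Gq) _.
exact: Vop_is_inverse.
Qed.

End P9.

Section P10.
Variable R : realType.
Implicit Types (phi psi : R -> R) (x y s t u : R) (f g : cfun R) (S T A : op R).
Variables th1 th2 : R -> R.
Hypothesis b1 : bij_on `[0, 1] `[-1, 0] th1.
Hypothesis d1 : decr_on `[0, 1] th1.
Hypothesis b2 : bij_on `[0, 1] `[0, 1] th2.
Hypothesis i2 : incr_on `[0, 1] th2.

Local Notation N := (Nsub th1 th2).
Local Notation NN := (Nest th1 th2).

Lemma incr_inj (f : R -> R) : incr_on `[-1, 1] f -> {in `[-1, 1] &, injective f}.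
Proof.
move=> inc x y xI yI e; have [xy|yx|//] := ltgtP x y.
  by have := inc _ _ xI yI xy; rewrite e ltxx.
by have := inc _ _ yI xI yx; rewrite e ltxx.
Qed.

Lemma Col_decomp_l S : Col NN S ->
  exists A T, [/\ Grp (Alg NN) A, Orb th1 th2 T & op_eq S (op_comp A T)].
Proof.
move=> [[bS [S' [bS' iS]]] H]; have [j1 j2] := iS.
have imgN t : t \in `[0, 1] -> exists2 s, s \in `[0, 1] & S @` N t = N s.
  move=> tK.
  have : NN (S @` N t).
    by apply/(H _ (Nsub_closed _ _ t)); apply/(Nest_P _ _); exists t.
  by move/(Nest_P _ _) => [s sK E]; exists s.
have preN t : exists s, t \in `[0, 1] -> s \in `[0, 1] /\ S @` N s = N t.
  have [tK|tK] := boolP (t \in `[0, 1]); last by exists 0.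
  pose M := [set g | C0 g /\ N t (S g)].
  have cM : closed_subspace M := preimage_closed bS (Nsub_closed _ _ t).
  have img : S @` M = N t.
    apply/seteqP; split; first by move=> _ [g [_ h] <-].
    move=> h Nh; have Ch := N_C0 Nh.
    exists (S' h); last exact: (j1 h Ch).
    split; first by case: bS' => + _ _; apply.
    by have := j1 h Ch; rewrite /op_comp => ->.
  have : NN M by apply/(H M cM); rewrite /op_image img; apply/(Nest_P _ _); exists t.
  by move/(Nest_P _ _) => [s sK Ms]; exists s => _; rewrite -Ms.
have [tau Htau] := choice preN.
have tauK t : t \in `[0, 1] -> tau t \in `[0, 1] by move=> /(Htau t) [].
have Etau t : t \in `[0, 1] -> S @` N (tau t) = N t by move=> /(Htau t) [].
have backN t : t \in `[0, 1] -> S' @` N t = N (tau t).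
  by move=> tK; rewrite -(Etau t tK) (image_back iS (@N_C0 _ _ _ _)).
have tau_lt s t : s \in `[0, 1] -> t \in `[0, 1] -> s < t -> tau s < tau t.
  move=> sK tK st.
  have sub : N (tau s) `<=` N (tau t).
    rewrite -(backN s sK) -(backN t tK) => _ [f Nf <-]; exists f => //.
    exact: (Nsub_mono d1 i2 sK tK (ltW st) Nf).
  rewrite lt_def (Nsub_le b1 b2 i2 (tauK s sK) (tauK t tK) sub) andbT.
  apply/eqP => e; move: st; rewrite (Nsub_eq b1 b2 tK sK) ?ltxx //.
  by rewrite -(Etau t tK) -(Etau s sK) e.
have tau_le s t : s \in `[0, 1] -> t \in `[0, 1] -> s <= t -> tau s <= tau t.
  move=> sK tK; rewrite le_eqVlt => /orP[/eqP ->//|st].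
  exact/ltW/tau_lt.
have tau_surj u : u \in `[0, 1] -> exists2 s, s \in `[0, 1] & tau s = u.
  move=> uK; have [s sK E] := imgN u uK.
  exists s => //; apply: (Nsub_eq b1 b2 (tauK s sK) uK).
  by rewrite -(backN s sK) -E (image_back iS (@N_C0 _ _ _ _)).
have tau0 : tau 0 = 0.
  have [s sK e] := tau_surj 0 (@K0 R).
  have s0 : 0 <= s by move: sK; rewrite inI_itv => /andP[].
  have := tau_le 0 s (@K0 R) sK s0; rewrite e => h.
  apply/eqP; rewrite eq_le h /=.
  by have := tauK 0 (@K0 R); rewrite inI_itv => /andP[].
have pre1 y : exists t, -1 <= y <= 0 -> t \in `[0, 1] /\ th1 t = y.
  have [yr|yr] := boolP (-1 <= y <= 0); last by exists 0.
  by have [t tK e] := th1_surj b1 yr; exists t.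
have pre2 y : exists t, 0 <= y <= 1 -> t \in `[0, 1] /\ th2 t = y.
  have [yr|yr] := boolP (0 <= y <= 1); last by exists 0.
  by have [t tK e] := th2_surj b2 yr; exists t.
have [io1 Hio1] := choice pre1; have [io2 Hio2] := choice pre2.
have io1K t : t \in `[0, 1] -> io1 (th1 t) = t.
  move=> tK; have [h1 h2] := Hio1 _ (th1_rng b1 tK).
  exact (th1_inj b1 h1 tK h2).
have io2K t : t \in `[0, 1] -> io2 (th2 t) = t.
  move=> tK; have [h1 h2] := Hio2 _ (th2_rng b2 tK).
  exact (th2_inj b2 h1 tK h2).
pose phi x := if x <= 0 then th1 (tau (io1 x)) else th2 (tau (io2 x)).
have phi1 t : t \in `[0, 1] -> phi (th1 t) = th1 (tau t).
  move=> tK; rewrite /phi; have /andP[_ ->] := th1_rng b1 tK.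
  by rewrite io1K.
have phi2 t : t \in `[0, 1] -> phi (th2 t) = th2 (tau t).
  move=> tK; rewrite /phi; case: ifP => h.
    have e : th2 t = 0.
      by apply/eqP; rewrite eq_le h; have /andP[] := th2_rng b2 tK.
    have t0 := th2_eq0 b2 i2 tK e.
    rewrite e -(th1_0 b1 d1) io1K ?t0 ?tau0 ?(th1_0 b1 d1) ?(th2_0 b2 i2) //.
    exact: (@K0 R).
  by rewrite io2K.
have split1 x : x \in `[-1, 1] -> x <= 0 -> exists2 t, t \in `[0, 1] & th1 t = x.
  move=> xI x0; apply: th1_surj => //.
  by move: xI; rewrite inI_itv => /andP[-> _].
have split2 x : x \in `[-1, 1] -> 0 < x -> exists2 t, t \in `[0, 1] & th2 t = x.
  move=> xI x0; apply: th2_surj => //.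
  by move: xI; rewrite inI_itv => /andP[_ ->]; rewrite ltW.
have pos2 t : t \in `[0, 1] -> 0 < th2 t -> 0 < th2 (tau t).
  move=> tK h.
  have t0 : 0 < t.
    rewrite lt_def; move: tK; rewrite inI_itv => /andP[-> _]; rewrite andbT.
    by apply/eqP => e; move: h; rewrite e (th2_0 b2 i2) ltxx.
  have := tau_lt 0 t (@K0 R) tK t0; rewrite tau0 => h'.
  by rewrite -(th2_0 b2 i2) (th2_lt i2 (@K0 R) (tauK t tK)).
have Gp : Gamma phi.
  have phiI x : x \in `[-1, 1] -> phi x \in `[-1, 1].
    move=> xI; have [x0|x0] := leP x 0.
      have [t tK <-] := split1 x xI x0; rewrite phi1 //; exact (th1_I b1 (tauK t tK)).
    have [t tK <-] := split2 x xI x0; rewrite phi2 //; exact (th2_I b2 (tauK t tK)).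
  have inc : incr_on `[-1, 1] phi.
    move=> x y xI yI xy.
    have [y0|y0] := leP y 0.
      have x0 : x <= 0 by apply: ltW; exact: lt_le_trans xy y0.
      have [a aK ea] := split1 x xI x0; have [b bK eb] := split1 y yI y0.
      rewrite -ea -eb !phi1 // (th1_lt d1 (tauK a aK) (tauK b bK)).
      apply: tau_lt => //; rewrite -(th1_lt d1 aK bK) ea eb //.
    have [b bK eb] := split2 y yI y0.
    have [x0|x0] := leP x 0.
      have [a aK ea] := split1 x xI x0.
      rewrite -ea -eb phi1 // phi2 //.
      have /andP[_ h1] := th1_rng b1 (tauK a aK).
      have h2 := pos2 b bK (ltac:(by rewrite eb)).
      exact: le_lt_trans h1 h2.
    have [a aK ea] := split2 x xI x0.
    rewrite -ea -eb !phi2 // (th2_lt i2 (tauK a aK) (tauK b bK)).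
    apply: tau_lt => //; rewrite -(th2_lt i2 aK bK) ea eb //.
  split => //; split => //.
  - exact: incr_inj.
  - move=> y yI; have [y0|y0] := leP y 0.
      have [w wK ew] := split1 y yI y0; have [s sK es] := tau_surj w wK.
      by exists (th1 s); [exact (th1_I b1 sK) | rewrite phi1 // es].
    have [w wK ew] := split2 y yI y0; have [s sK es] := tau_surj w wK.
    by exists (th2 s); [exact (th2_I b2 sK) | rewrite phi2 // es].
have Gt : Gamma_th th1 th2 phi.
  split => // t tK; exists (tau t); first exact: tauK.
  by rewrite phi1 // phi2.
have [psi [Gq iv]] := Gm_inv Gp; have [K1 K2] := iv.
have Vq t : t \in `[0, 1] -> Vop psi @` N t = N (tau t).
  move=> tK; apply: (Vop_Nsub_gen b1 b2 Gq Gp (inv_on_I_sym iv) tK (tauK t tK)).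
    by rewrite -phi1 // K1 // (th1_I b1 tK).
  by rewrite -phi2 // K1 // (th2_I b2 tK).
have Vp t : t \in `[0, 1] -> Vop phi @` N (tau t) = N t.
  move=> tK; apply: (Vop_Nsub_gen b1 b2 Gp Gq iv (tauK t tK) tK).
    by rewrite phi1.
  by rewrite phi2.
exists (op_comp S (Vop psi)), (Vop phi); split.
- split.
    split; first exact: bounded_comp bS (Vop_bounded Gq).
    move=> M /(Nest_P _ _) [t tK ->] f Nf.
    rewrite -(Etau t tK) -(Vq t tK).
    by exists (Vop psi f) => //; exists f.
  split; first exact: bounded_comp bS (Vop_bounded Gq).
  exists (op_comp (Vop phi) S'); split.
    split; first exact: bounded_comp (Vop_bounded Gp) bS'.
    move=> M /(Nest_P _ _) [t tK ->] f Nf.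
    have : (S' @` N t) (S' f) by exists f.
    rewrite backN // => h.
    by rewrite -(Vp t tK); exists (S' f).
  split; first exact: bounded_comp (Vop_bounded Gp) bS'.
  exact: is_inverse_comp bS' (Vop_bounded Gq) iS (Vop_is_inverse Gq Gp (inv_on_I_sym iv)).
- by exists phi.
- move=> f Cf; rewrite /op_comp Vop_inv //; exact: inv_on_I_sym.
Qed.

End P10.

Unset Implicit Arguments.
Local Close Scope complex_scope.

Theorem theorem5p6 (R : realType) (th1 th2 : R -> R) :
  bij_on `[0, 1] `[-1, 0] th1 -> decr_on `[0, 1] th1 ->
  bij_on `[0, 1] `[0, 1] th2 -> incr_on `[0, 1] th2 ->
  [/\ Gamma_th th1 th2 `<=` @Gamma R,
      Gamma_th th1 th2 id,
      (forall phi psi, Gamma_th th1 th2 phi -> Gamma_th th1 th2 psi ->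
         Gamma_th th1 th2 (phi \o psi)) &
      (forall phi psi, Gamma_th th1 th2 phi -> @Gamma R psi ->
         inv_on_I phi psi -> Gamma_th th1 th2 psi)]
  /\
  ((forall phi, @Gamma R phi ->
      (Col (Nest th1 th2) (Vop phi) <-> Gamma_th th1 th2 phi)) /\
   [/\ Orb th1 th2 `<=` Col (Nest th1 th2),
       Orb th1 th2 (@op_id R),
       (forall S T, Orb th1 th2 S -> Orb th1 th2 T -> Orb th1 th2 (op_comp S T)) &
       (forall T, Orb th1 th2 T -> exists2 T', Orb th1 th2 T' & is_inverse T T')])
  /\
  ((forall S, Col (Nest th1 th2) S <->
      exists A T, [/\ Grp (Alg (Nest th1 th2)) A, Orb th1 th2 T &
                      op_eq S (op_comp A T)]) /\
   (forall T, Grp (Alg (Nest th1 th2)) T -> Orb th1 th2 T -> op_eq T (@op_id R))).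
Proof.
move=> b1 d1 b2 i2.
split; [|split; [split|split]].
- split.
  + by move=> phi [].
  + exact: Gth_id.
  + by move=> phi psi; apply: Gth_comp.
  + by move=> phi psi; apply: (Gth_inv b1 d1 b2 i2).
- move=> phi Gp; split.
    exact (Gth_of_Col b1 d1 b2 i2 Gp).
  exact (@Col_of_Gth _ _ _ b1 d1 b2 i2 phi).
- split.
  + by move=> T; apply: (Orb_Col b1 d1 b2 i2).
  + exact: Orb_id.
  + by move=> S T; apply: Orb_comp.
  + by move=> T; apply: (Orb_inv b1 d1 b2 i2).
- move=> S; split; first exact: (Col_decomp_l b1 d1 b2 i2).
  by move=> [A [T [GA OT ES]]]; exact: (Col_decomp_r b1 d1 b2 i2 GA OT ES).
- by move=> T; apply: (Grp_Orb_id b1 d1 b2 i2).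
Qed.
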